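(* Let $\Gamma$ be a countable group with a covering family $\mathcal E$ of malnormal subgroups and $\alpha>0$ such that $\Gamma$ satisfies $\mathbf K\geq_{\text{local}}\alpha$ relatively to $\mathcal E$. There exists $\bar\delta=\bar\delta(\alpha)>0$ such that for any path connected component $R$ of $[\mathcal S^*(\Gamma)/\Gamma]^{\leq\bar\delta}$ and any base point $r_0\in R$, there is $H_R\in\mathcal E$ such that $\iota_*(\pi_1(R,r_0))$ is a subgroup of $H_R$, where $\iota:R\to\mathcal S^*(\Gamma)/\Gamma$ is the inclusion and $\pi_1(\mathcal S^*(\Gamma)/\Gamma,\iota(r_0))$ is identified with $\Gamma$ (by a fixed identification, well defined up to conjugacy).
   Context: Let $\mathbf H$ be the separable infinite-dimensional real Hilbert space; $\mathcal S(\Gamma)$ is the unit sphere of $\ell^2(\Gamma,\mathbf H)$ with $\Gamma$ acting by $(\gamma.f)(x)=f(\gamma^{-1}x)$, $\mathcal S^*(\Gamma)=\{f:\gamma.f\ne f\ \forall\gamma\neq e\}$, and $\mathcal S^*(\Gamma)/\Gamma$ (quotient $\ell^2$ metric) is a classifying space for $\Gamma$, so its fundamental group is isomorphic to $\Gamma$. Thin part: with $\Pi$ the projection and $\mathbf d$ the $\ell^2$ distance, $[\mathcal S^*(\Gamma)/\Gamma]^{\leq\delta}=\Pi(\{x\in\mathcal S^*(\Gamma):\mathbf d(x,\gamma.x)\le\delta\text{ for some }\gamma\in\Gamma\setminus\{e\}\})$. For a group $G$ with regular representation $\rho_G$ on $\ell^2(G)$ and finite $S\subset G$, $\mathbf K(\rho_G,G,S)=\inf_{u\neq0}\max_{s\in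 S}\|s.u-u\|_{\ell^2}/\|u\|_{\ell^2}$. A subgroup $H$ is malnormal if $gHg^{-1}\cap H=\{e\}$ for $g\notin H$; $\mathcal E$ is covering if every element of $\Gamma$ lies in some member of $\mathcal E$; $\Gamma$ satisfies $\mathbf K\geq_{\text{local}}\alpha$ relatively to $\mathcal E$ if $\mathbf K(\rho_{\langle x,y\rangle},\langle x,y\rangle,\{x,y\})\geq\alpha$ whenever $H\in\mathcal E$, $x\in H\setminus\{e\}$, $y\notin H$. *)

(* Defs.v *)
From mathcomp Require Import all_boot all_order all_algebra.
From mathcomp Require Import all_classical all_reals all_analysis.
Set Implicit Arguments. Unset Strict Implicit. Unset Printing Implicit Defensive.
Import Order.TTheory GRing.Theory Num.Theory.
Local Open Scope classical_set_scope.
Local Open Scope ring_scope.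

Record cgroup := CGroup {
  gcar :> countType;
  gmul : gcar -> gcar -> gcar;
  gone : gcar;
  ginv : gcar -> gcar;
  gmulA : forall x y z, gmul x (gmul y z) = gmul (gmul x y) z;
  gmul1 : forall x, gmul gone x = x;
  gmulV : forall x, gmul (ginv x) x = gone }.

Section Defs.
Variables (R : realType) (G : cgroup).
Local Notation "x * y" := (gmul x y).
Local Notation "x ^-1" := (ginv x).
Local Notation e := (gone G).

Definition subgroup (S : set G) : Prop :=
  S e /\ (forall x y, S x -> S y -> S (x * y)) /\ (forall x, S x -> S x^-1).
Definition gen2 (x y : G) : set G :=
  [set z | forall S, subgroup S -> S x -> S y -> S z].
Definition malnormal (H : set G) : Prop :=
  subgroup H /\ forall g h, ~ H g -> H h -> H (g * h * g^-1) -> h = e.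
Definition covering (E : set (set G)) : Prop :=
  forall g, exists2 H, E H & H g.

Definition sqsum (u : G -> R) : \bar R := (\esum_(z in setT) ((u z) ^+ 2)%:E)%E.
Definition l2norm (u : G -> R) : R := Num.sqrt (fine (sqsum u)).
Definition lreg (s : G) (u : G -> R) : G -> R := fun z => u (s^-1 * z).
(* K(rho_{<x,y>}, <x,y>, {x,y}): vectors of ell^2(<x,y>) are realised as
   square-summable functions on G supported in <x,y> *)
Definition Kxy (x y : G) : R :=
  inf [set r | exists u : G -> R,
        [/\ (forall z, u z != 0 -> gen2 x y z), (sqsum u < +oo)%E,
            (exists z, u z != 0) &
            r = Num.max (l2norm (fun z => lreg x u z - u z))
                        (l2norm (fun z => lreg y u z - u z)) / l2norm u]].
Definition K_local_ge (E : set (set G)) (alpha : R) : Prop :=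
  forall H x y, E H -> H x -> x <> e -> ~ H y -> alpha <= Kxy x y.

(* H = ell^2(nat, R) (separable infinite-dim real Hilbert space);
   ell^2(G, H) = functions f : G -> nat -> R with sum_x ||f x||^2 < oo *)
Definition vec := G -> nat -> R.
Definition sqnormV (f : vec) : \bar R :=
  (\esum_(x in setT) \esum_(n in setT) ((f x n) ^+ 2)%:E)%E.
Definition distV (f g : vec) : R := Num.sqrt (fine (sqnormV (fun x n => f x n - g x n))).
Definition actV (g : G) (f : vec) : vec := fun x => f (g^-1 * x).
Definition sphere (f : vec) : Prop := sqnormV f = 1%E.
Definition Sstar (f : vec) : Prop := sphere f /\ forall g, g <> e -> actV g f <> f.

(* The quotient S*(G)/G: a point is represented by any f in S*; two
   representatives give the same point iff they are in the same orbit;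
   quotient ell^2 metric. *)
Definition orbit_eq (f f' : vec) : Prop := exists g, f' = actV g f.
Definition qdist (f f' : vec) : R := inf [set distV f (actV g f') | g in setT].

(* Thin part (as a set of representatives, closed under the orbit relation) *)
Definition thin (delta : R) (f : vec) : Prop :=
  Sstar f /\ exists y, [/\ Sstar y, orbit_eq f y &
                          exists2 g, g <> e & distV y (actV g y) <= delta].

Definition I01 : set R := `[0, 1]%classic.
(* continuous paths [0,1] -> S*(G)/G, given by representatives *)
Definition qpath (p : R -> vec) : Prop :=
  (forall t, I01 t -> Sstar (p t)) /\
  forall t, I01 t -> forall eps, 0 < eps -> exists2 eta, 0 < eta &
    forall s, I01 s -> `|s - t| < eta -> qdist (p s) (p t) < eps.
Definition spath (q : R -> vec) : Prop :=
  (forall t, I01 t -> Sstar (q t)) /\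
  forall t, I01 t -> forall eps, 0 < eps -> exists2 eta, 0 < eta &
    forall s, I01 s -> `|s - t| < eta -> distV (q s) (q t) < eps.

Definition pathcomp (A : vec -> Prop) (r0 : vec) : set vec :=
  [set f | Sstar f /\ exists p, [/\ qpath p, orbit_eq (p 0) r0, orbit_eq (p 1) f &
                                   forall t, I01 t -> A (p t)]].
End Defs.

(* Main.v *)
Require Import Defs.
From mathcomp Require Import all_boot all_order all_algebra.
From mathcomp Require Import all_classical all_reals all_analysis.
From mathcomp Require Import ring lra.
Set Implicit Arguments. Unset Strict Implicit. Unset Printing Implicit Defensive.
Import Order.TTheory GRing.Theory Num.Theory.
Local Open Scope classical_set_scope.
Local Open Scope ring_scope.

Section L2.
Variables (R : realType).
Local Open Scope ereal_scope.

Lemma esumZ (T : choiceType) (S : set T) (k : R) (a : T -> \bar R) :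
  (0 <= k)%R -> (forall i, 0 <= a i) ->
  \esum_(i in S) (k%:E * a i) = k%:E * \esum_(i in S) a i.
Proof.
move=> k0 a0; rewrite /esum -ereal_supZl //; last first.
  by apply/set0P; exists 0; exists set0; [exact: fsets_set0| rewrite fsbig_set0].
congr ereal_sup; apply/seteqP; split => x /=.
  move=> [X [finX XS] <-]; exists (\sum_(i \in X) a i); first by exists X.
  by rewrite ge0_mule_fsumr.
move=> [y [X [finX XS] <-] <-]; exists X => //.
by rewrite ge0_mule_fsumr.
Qed.

Definition Q (T : choiceType) (a : T -> R) : \bar R :=
  \esum_(i in [set: T]) ((a i) ^+ 2)%:E.

Lemma Q_ge0 (T : choiceType) (a : T -> R) : 0 <= Q a.
Proof. by apply: esum_ge0 => i _; rewrite lee_fin sqr_ge0. Qed.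

Lemma Q_term (T : choiceType) (a : T -> R) i : ((a i) ^+ 2)%:E <= Q a.
Proof.
apply: esum_ge; exists [set i]; first by split => //; exact: finite_set1.
by rewrite fsbig_set1.
Qed.
Local Close Scope ereal_scope.



Lemma sq_split (x y c : R) : 0 < c ->
  (x + y) ^+ 2 <= (1 + c) * x ^+ 2 + (1 + c^-1) * y ^+ 2.
Proof.
move=> c0; set d := c^-1.
have d0 : 0 < d by rewrite invr_gt0.
have cd : c * d = 1 by rewrite mulfV // gt_eqF.
have : 0 <= d * (c * x - y) ^+ 2 by apply: mulr_ge0; [exact: ltW | exact: sqr_ge0].
have e1 : d * (c * x - y) ^+ 2 = c * (c * d) * x ^+ 2 - 2 * (c * d) * x * y + d * y ^+ 2 by ring.
rewrite e1 cd => h; nra.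
Qed.

Lemma aux_frac (s u v : R) : 0 <= s -> s <= u -> 0 < u -> 0 < v ->
  (1 + v / u) * s ^+ 2 <= (u + v) * s.
Proof.
move=> s0 su u0 v0.
have -> : (1 + v / u) * s ^+ 2 = (u + v) * (s ^+ 2 / u) by field; rewrite gt_eqF.
apply: ler_wpM2l; first lra.
by rewrite ler_pdivrMr // expr2 ler_wpM2l.
Qed.

Lemma mink_real (X a b : R) : 0 <= a -> 0 <= b ->
  (forall c, 0 < c -> X <= (1 + c) * a ^+ 2 + (1 + c^-1) * b ^+ 2) ->
  X <= (a + b) ^+ 2.
Proof.
move=> a0 b0 H; apply/ler_addgt0Pr => e e0.
set k := 2 * (a + b) + 1.
have k0 : 0 < k by rewrite /k; lra.
set eps := e / k.
have eps0 : 0 < eps by rewrite divr_gt0.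
have ek : eps * k = e by rewrite /eps mulfVK // gt_eqF.
set u := a + eps; set v := b + eps.
have u0 : 0 < u by rewrite /u; lra.
have v0 : 0 < v by rewrite /v; lra.
have c0 : 0 < v / u by rewrite divr_gt0.
have := H _ c0; rewrite invf_div.
have h1 := aux_frac a0 (_ : a <= u) u0 v0.
have h2 := aux_frac b0 (_ : b <= v) v0 u0.
have au : a <= u by rewrite /u; lra.
have bv : b <= v by rewrite /v; lra.
move: (h1 au) (h2 bv) => {h1 h2} h1 h2 hX.
have : X <= (u + v) * (a + b) by nra.
rewrite /u /v => h3.
have : (a + eps + (b + eps)) * (a + b) <= (a + b) ^+ 2 + eps * k.
  rewrite /k; nra.
rewrite ek; lra.
Qed.

Local Open Scope ereal_scope.

Lemma Q_fin (T : choiceType) (a : T -> R) : Q a < +oo -> Q a = (fine (Q a))%:E.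
Proof. by move=> h; rewrite fineK // ge0_fin_numE // Q_ge0. Qed.

Lemma Q_mink (T : choiceType) (a b : T -> R) : Q a < +oo -> Q b < +oo ->
  Q (fun i => (a i + b i)%R) <=
  ((Num.sqrt (fine (Q a)) + Num.sqrt (fine (Q b))) ^+ 2)%:E.
Proof.
move=> ha hb.
have A0 : (0 <= fine (Q a))%R by apply: fine_ge0; exact: Q_ge0.
have B0 : (0 <= fine (Q b))%R by apply: fine_ge0; exact: Q_ge0.
have key : forall c : R, (0 < c)%R -> Q (fun i => (a i + b i)%R) <=
    ((1 + c) * fine (Q a) + (1 + c^-1) * fine (Q b))%:E.
  move=> c c0; rewrite EFinD !EFinM -Q_fin // -Q_fin //.
  have s0 : forall (x : R) i, 0 <= (x ^+ 2)%:E by move=> x i; rewrite lee_fin sqr_ge0.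
  have c1 : (0 <= 1 + c)%R by rewrite addr_ge0 // ltW.
  have c2 : (0 <= 1 + c^-1)%R by rewrite addr_ge0 // ltW // invr_gt0.
  rewrite /Q -!esumZ //; try by move=> i; rewrite lee_fin sqr_ge0.
  rewrite -esumD; try by move=> i _; rewrite -EFinM lee_fin mulr_ge0 ?sqr_ge0.
  apply: le_esum => i _; rewrite -!EFinM -EFinD lee_fin; exact: sq_split.
have hab : Q (fun i => (a i + b i)%R) < +oo.
  by apply: (le_lt_trans (key 1%R ltr01)); rewrite ltry.
rewrite (Q_fin hab) lee_fin; apply: mink_real; rewrite ?sqrtr_ge0 // => c c0.
by rewrite !sqr_sqrtr // -lee_fin -Q_fin //; exact: key.
Qed.
End L2.

Section Grp.
Variable G : cgroup.
Implicit Types x y z : G.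

Lemma gmulA' x y z : gmul x (gmul y z) = gmul (gmul x y) z. Proof. exact: gmulA. Qed.

Lemma gmulVr x : gmul x (ginv x) = gone G.
Proof.
have: gmul (gmul (ginv (ginv x)) (ginv x)) (gmul x (ginv x)) = gone G.
  by rewrite -gmulA (gmulA (ginv x) x) gmulV gmul1 gmulV.
by rewrite gmulV gmul1.
Qed.

Lemma gmul1r x : gmul x (gone G) = x.
Proof. by rewrite -(gmulV x) gmulA gmulVr gmul1. Qed.

Lemma ginv_uniq x y : gmul y x = gone G -> y = ginv x.
Proof. by move=> h; rewrite -[y]gmul1r -(gmulVr x) gmulA h gmul1. Qed.

Lemma ginvK x : ginv (ginv x) = x.
Proof. by apply/esym/ginv_uniq; rewrite gmulVr. Qed.

Lemma ginvM x y : ginv (gmul x y) = gmul (ginv y) (ginv x).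
Proof.
apply/esym/ginv_uniq.
by rewrite -gmulA (gmulA (ginv x)) gmulV gmul1 gmulV.
Qed.

Lemma ginv1 : ginv (gone G) = gone G.
Proof. by apply/esym/ginv_uniq; rewrite gmul1. Qed.

Lemma gmulKV x z : gmul (ginv x) (gmul x z) = z.
Proof. by rewrite gmulA gmulV gmul1. Qed.

Lemma gmulVK x z : gmul x (gmul (ginv x) z) = z.
Proof. by rewrite gmulA gmulVr gmul1. Qed.

Lemma gmulrK x z : gmul (gmul z x) (ginv x) = z.
Proof. by rewrite -gmulA gmulVr gmul1r. Qed.

Lemma gmulrVK x z : gmul (gmul z (ginv x)) x = z.
Proof. by rewrite -gmulA gmulV gmul1r. Qed.

Lemma ginv_eq1 x : ginv x = gone G -> x = gone G.
Proof. by move=> h; rewrite -[x]ginvK h ginv1. Qed.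

Lemma conj_neq1 m g : g <> gone G -> gmul (gmul (ginv m) g) m <> gone G.
Proof.
move=> gn h; apply: gn.
have : gmul m (gmul (gmul (gmul (ginv m) g) m) (ginv m)) = gone G.
  by rewrite h gmul1 gmulVr.
by rewrite gmulrK gmulVK.
Qed.

End Grp.

Section Vec.
Variables (R : realType) (G : cgroup).
Local Open Scope ereal_scope.

Lemma actV_comp (a b : G) (f : vec R G) : actV a (actV b f) = actV (gmul a b) f.
Proof.
by apply/funext => x; rewrite /actV ginvM gmulA.
Qed.

Lemma actV1 (f : vec R G) : actV (gone G) f = f.
Proof. by apply/funext => x; rewrite /actV ginv1 gmul1. Qed.

Definition flat (f : vec R G) : G * nat -> R := fun k => f k.1 k.2.

Lemma sqnormV_Q (f : vec R G) : sqnormV f = Q (flat f).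
Proof.
rewrite /sqnormV /Q (esum_esum (I := setT) (J := fun _ => setT)); last first.
  by move=> i j _ _; rewrite lee_fin sqr_ge0.
congr esum; apply/seteqP; split => //.
Qed.

Lemma Q_ext (T : choiceType) (a b : T -> R) : (forall i, a i = b i) -> Q a = Q b.
Proof. by move=> h; congr Q; apply/funext. Qed.

Lemma QN (T : choiceType) (a : T -> R) : Q (fun i => - a i)%R = Q a.
Proof. by rewrite /Q; apply: eq_esum => i _; rewrite sqrrN. Qed.

Lemma Q_tri (T : choiceType) (a b : T -> R) : Q a < +oo -> Q b < +oo ->
  Q (fun i => (a i + b i)%R) < +oo /\
  (Num.sqrt (fine (Q (fun i => (a i + b i)%R))) <=
   Num.sqrt (fine (Q a)) + Num.sqrt (fine (Q b)))%R.
Proof.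
move=> ha hb; have := Q_mink ha hb => h.
have hab : Q (fun i => (a i + b i)%R) < +oo by apply: (le_lt_trans h); rewrite ltry.
split => //; move: h; rewrite (Q_fin hab) lee_fin => h.
rewrite -[X in (_ <= X)%R]ger0_norm ?addr_ge0 ?sqrtr_ge0 //.
by rewrite -sqrtr_sqr; apply: ler_wsqrtr.
Qed.


Lemma esum_termT (T : choiceType) (a : T -> \bar R) i : (forall j, 0 <= a j) ->
  a i <= \esum_(j in [set: T]) a j.
Proof.
move=> a0; apply: esum_ge; exists [set i]; first by split => //; exact: finite_set1.
by rewrite fsbig_set1.
Qed.

Lemma sqnormV_act (k : G) (f : vec R G) : sqnormV (actV k f) = sqnormV f.
Proof.
rewrite /sqnormV /actV (reindex_esum setT setT (gmul k)); last first.
  split => //.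
  - by move=> a b _ _ h; rewrite -(gmulKV k a) -(gmulKV k b) h.
  - by move=> y _; exists (gmul (ginv k) y) => //; rewrite gmulVK.
by apply: eq_esum => i _; rewrite gmulKV.
Qed.

Lemma distV_act (k : G) (f g : vec R G) : distV (actV k f) (actV k g) = distV f g.
Proof.
by rewrite /distV -(sqnormV_act k (fun x n => (f x n - g x n)%R)).
Qed.

Lemma distV_sym (f g : vec R G) : distV f g = distV g f.
Proof.
rewrite /distV; congr (Num.sqrt (fine _)); apply: eq_esum => x _.
by apply: eq_esum => n _; rewrite -sqrrN opprB.
Qed.

Definition dfin (f g : vec R G) := sqnormV (fun x n => (f x n - g x n)%R) < +oo.

Lemma sphere_dfin (f g : vec R G) : sphere f -> sphere g -> dfin f g.
Proof.
rewrite /sphere /dfin !sqnormV_Q => hf hg.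
have ha : Q (flat f) < +oo by rewrite hf ltry.
have hb : Q (fun k => - flat g k)%R < +oo by rewrite QN hg ltry.
have [h _] := Q_tri ha hb; move: h.
by congr (_ < _); apply: Q_ext.
Qed.

Lemma distV_tri (f g h : vec R G) : dfin f g -> dfin g h ->
  (distV f h <= distV f g + distV g h)%R.
Proof.
rewrite /dfin /distV !sqnormV_Q => h1 h2.
have [_] := Q_tri h1 h2.
congr (Num.sqrt (fine _) <= _)%R; apply: Q_ext => k; rewrite /flat /=.
by rewrite addrA subrK.
Qed.

Lemma orbit_thin (delta : R) (m g : G) (z : vec R G) :
  g <> gone G -> (distV (actV m z) (actV g (actV m z)) <= delta)%R ->
  exists2 g', g' <> gone G & (distV z (actV g' z) <= delta)%R.
Proof.
move=> gn hd; exists (gmul (gmul (ginv m) g) m); first exact: conj_neq1.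
rewrite -(distV_act m) actV_comp.
by rewrite !gmulA gmulVr gmul1 -actV_comp.
Qed.

End Vec.

Section Cosets.
Variables (R : realType) (G : cgroup) (g g' : G).
Local Open Scope ereal_scope.

Let L := gen2 g g'.

Lemma gen2_sub : subgroup L.
Proof.
rewrite /L /gen2 /=.
split; first by move=> S [? _] _ _.
split; first by move=> a b ha hb S hS Sg Sg'; have [_ [hm _]] := hS; exact: hm (ha S hS Sg Sg') (hb S hS Sg Sg').
by move=> a ha S hS Sg Sg'; have [_ [_ hi]] := hS; exact: hi _ (ha S hS Sg Sg').
Qed.

Lemma gen2_l : L g. Proof. by rewrite /L /gen2 /= => S _ Sg _. Qed.
Lemma gen2_r : L g'. Proof. by rewrite /L /gen2 /= => S _ _ Sg'. Qed.

Lemma L1 : L (gone G). Proof. by case: gen2_sub. Qed.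
Lemma LM a b : L a -> L b -> L (gmul a b). Proof. by case: gen2_sub => _ [h _]; exact: h. Qed.
Lemma LV a : L a -> L (ginv a). Proof. by case: gen2_sub => _ [_ h]; exact: h. Qed.

Definition rep (w : G) : G := xget (gone G) [set v | L (gmul w (ginv v))].

Lemma rep_in w : L (gmul w (ginv (rep w))).
Proof.
have h := @xgetPex G (gone G) [set v | L (gmul w (ginv v))].
apply: h; exists w; rewrite /= gmulVr; exact: L1.
Qed.

Lemma rep_L z w : L z -> rep (gmul z w) = rep w.
Proof.
move=> Lz; rewrite /rep; congr xget; apply/seteqP; split => v /=.
  move=> h; have := LM (LV Lz) h; by rewrite -gmulA gmulKV.
by move=> h; rewrite -gmulA; exact: LM.
Qed.

Lemma rep_rep w : rep (rep w) = rep w.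
Proof.
have := rep_L w (LV (rep_in w)).
by rewrite ginvM ginvK gmulrVK.
Qed.

Definition Reps : set G := [set c | rep c = c].

Lemma esum_cosets (F : G -> \bar R) : (forall w, 0 <= F w) ->
  \esum_(w in [set: G]) F w = \esum_(c in Reps) \esum_(z in L) F (gmul z c).
Proof.
move=> F0.
rewrite (esum_esum (I := Reps) (J := fun _ => L) (a := fun c z => F (gmul z c))); last by [].
rewrite -(reindex_esum (Reps `*`` (fun _ => L)) setT (fun k => gmul k.2 k.1) F) //.

split => //.
- move=> [c1 z1] [c2 z2]; rewrite !inE /= => -[h1 Lz1] [h2 Lz2] /= e.
  have ec : c1 = c2.
    by rewrite -h1 -h2 -(rep_L c1 Lz1) -(rep_L c2 Lz2) e.
  subst c2; congr (_, _).
  by rewrite -(gmulrK c1 z1) -(gmulrK c1 z2) e.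
- move=> w _; exists (rep w, gmul w (ginv (rep w))) => /=; last exact: gmulrVK.
  by split; [exact: rep_rep | exact: rep_in].
Qed.

End Cosets.

Section RevTri.
Variable R : realType.
Local Open Scope ereal_scope.

Lemma Q_fin_sub (T : choiceType) (a b : T -> R) : Q a < +oo -> Q b < +oo ->
  Q (fun i => (a i - b i)%R) < +oo.
Proof.
move=> ha hb; have hb' : Q (fun i => - b i)%R < +oo by rewrite QN.
by have [h _] := Q_tri ha hb'.
Qed.

Lemma rev_tri (T : choiceType) (a b : T -> R) : Q a < +oo -> Q b < +oo ->
  ((Num.sqrt (fine (Q a)) - Num.sqrt (fine (Q b))) ^+ 2)%:E <=
  Q (fun i => (a i - b i)%R).
Proof.
move=> ha hb.
have hd := Q_fin_sub ha hb.
have hd' := Q_fin_sub hb ha.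
have e1 : Q (fun i => (b i - a i)%R) = Q (fun i => (a i - b i)%R).
  by rewrite -QN; apply: Q_ext => i; rewrite opprB.
have [_ h1] := Q_tri hd hb.
have [_ h2] := Q_tri hd' ha.
have ea : Q (fun i => (a i - b i + b i)%R) = Q a by apply: Q_ext => i; rewrite subrK.
have eb : Q (fun i => (b i - a i + a i)%R) = Q b by apply: Q_ext => i; rewrite subrK.
rewrite ea in h1; rewrite eb e1 in h2.
rewrite (Q_fin hd) lee_fin.
have D0 : (0 <= fine (Q (fun i => (a i - b i)%R)))%R by apply: fine_ge0; exact: Q_ge0.
rewrite -[X in (_ <= X)%R](sqr_sqrtr D0).
move: h1 h2; set sA := Num.sqrt _; set sB := Num.sqrt _; set sD := Num.sqrt _ => h1 h2.
have sD0 : (0 <= sD)%R by exact: sqrtr_ge0.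
nra.
Qed.

Lemma esum_termS (T : choiceType) (S : set T) (a : T -> \bar R) i :
  (forall j, S j -> 0 <= a j) -> S i -> a i <= \esum_(j in S) a j.
Proof.
move=> a0 Si; apply: esum_ge; exists [set i]; first by split; [exact: finite_set1| move=> j ->].
by rewrite fsbig_set1.
Qed.

End RevTri.

Section LemA.
Variables (R : realType) (G : cgroup) (g g' : G) (x : vec R G).
Hypothesis hx : sphere x.
Local Open Scope ereal_scope.

Let L := gen2 g g'.
Let Reps := Reps g g'.

Let P (w : G) := Q (x w).
Let N c := \esum_(z in L) P (gmul z c).
Let Dd s c := \esum_(z in L) Q (fun n => (x (gmul (ginv s) (gmul z c)) n - x (gmul z c) n)%R).
Let Ds s := sqnormV (fun w n => (x w n - actV s x w n)%R).

Let P_ge0 w : 0 <= P w. Proof. exact: Q_ge0. Qed.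
Let P_fin w : P w < +oo.
Proof.
have h : P w <= \esum_(j in [set: G]) P j by apply: esum_termT.
apply: (le_lt_trans h).
have -> : \esum_(j in [set: G]) P j = 1 by exact: hx.
by rewrite ltry.
Qed.
Let N_ge0 c : 0 <= N c. Proof. by apply: esum_ge0 => z _. Qed.
Let Dd_ge0 s c : 0 <= Dd s c. Proof. by apply: esum_ge0 => z _; exact: Q_ge0. Qed.

Let sum_N : \esum_(c in Reps) N c = 1.
Proof. by rewrite /N /Reps /L -(@esum_cosets R G g g' P) //; move: hx; rewrite /sphere /sqnormV. Qed.

Let sum_D s : \esum_(c in Reps) Dd s c = Ds s.
Proof.
rewrite /Ds /sqnormV (@esum_cosets R G g g'); last by move=> w; apply: esum_ge0 => n _; rewrite lee_fin sqr_ge0.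
apply: eq_esum => c _; apply: eq_esum => z _; apply: eq_esum => n _.
by rewrite /actV -sqrrN opprB.
Qed.

Let Ds_fin s : Ds s < +oo.
Proof.
apply: sphere_dfin => //; rewrite /sphere sqnormV_act; exact: hx.
Qed.

Let N_fin c : Reps c -> N c < +oo.
Proof.
move=> Rc; apply: (le_lt_trans (esum_termS (S := Reps) (a := N) (fun j _ => N_ge0 j) Rc)).
by rewrite sum_N ltry.
Qed.

Let Dd_fin s c : Reps c -> Dd s c < +oo.
Proof.
move=> Rc; apply: (le_lt_trans (esum_termS (S := Reps) (a := Dd s) (fun j _ => Dd_ge0 s j) Rc)).
by rewrite sum_D.
Qed.

Let finE (y : \bar R) : 0 <= y -> y < +oo -> y = (fine y)%:E.
Proof. by move=> y0 yoo; rewrite fineK // ge0_fin_numE. Qed.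

Definition uc (c : G) : G -> R := fun z =>
  if z \in L then Num.sqrt (fine (P (gmul z c))) else 0%R.

Let sqsum_u c : sqsum (uc c) = N c.
Proof.
rewrite /sqsum /N [RHS]esum_mkcond; apply: eq_esum => z _; rewrite /uc.
case: ifP => _; last by rewrite expr0n.
by rewrite sqr_sqrtr ?fine_ge0 // -finE.
Qed.

Let sqsum_du s c : L s ->
  sqsum (fun z => lreg s (uc c) z - uc c z)%R <= Dd s c.
Proof.
move=> Ls; rewrite /Dd [leRHS]esum_mkcond; apply: le_esum => z _; rewrite /lreg /uc.
case: (boolP (z \in L)) => zL.
  have zL' : gmul (ginv s) z \in L.
    by apply: mem_set; exact: LM (LV Ls) (set_mem zL).
  rewrite zL' -gmulA.
  by apply: rev_tri; exact: P_fin.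
have zL' : gmul (ginv s) z \notin L.
  apply/negP => /set_mem h; move/negP: zL; apply; apply: mem_set.
  by have := LM Ls h; rewrite gmulVK.
by rewrite (negPf zL') subr0 expr0n.
Qed.


Let C := (fine (Ds g) + fine (Ds g'))%R.
Let Ds_ge0 s : 0 <= Ds s.
Proof. by apply: esum_ge0 => w _; apply: esum_ge0 => n _; rewrite lee_fin sqr_ge0. Qed.
Let C0 : (0 <= C)%R.
Proof. by rewrite /C addr_ge0 // fine_ge0. Qed.

Lemma pigeon : exists c, [/\ Reps c, (0 < fine (N c))%R &
  (fine (Dd g c) + fine (Dd g' c) <= C * fine (N c))%R].
Proof.
have [//|hneg] := pselect (exists c, [/\ Reps c, (0 < fine (N c))%R &
  (fine (Dd g c) + fine (Dd g' c) <= C * fine (N c))%R]).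
exfalso.
have [c0 [Rc0 Nc0]] : exists c0, Reps c0 /\ (0 < fine (N c0))%R.
  have [//|hn] := pselect (exists c0, Reps c0 /\ (0 < fine (N c0))%R).
  have : \esum_(c in Reps) N c = 0.
    apply: esum1 => c Rc; rewrite (finE (N_ge0 c) (N_fin Rc)).
    have h2 : ~ (0 < fine (N c))%R by move=> h; apply: hn; exists c.
    have h1 := fine_ge0 (N_ge0 c).
    congr EFin; apply/eqP; rewrite eq_le h1 andbT leNgt; exact/negP.
  by rewrite sum_N => /eqP; rewrite eqe oner_eq0.
set a := fun c => Dd g c + Dd g' c.
set b := fun c => ((C * fine (N c))%R)%:E.
set d := fun c => ((fine (Dd g c) + fine (Dd g' c) - C * fine (N c))%R)%:E.
have hab : forall c, Reps c -> a c = b c + d c.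
  move=> c Rc; rewrite /a /b /d -EFinD (addrC (C * fine (N c))%R) subrK EFinD.
  by rewrite -(finE (Dd_ge0 g c) (Dd_fin g Rc)) -(finE (Dd_ge0 g' c) (Dd_fin g' Rc)).
have hdpos : forall c, Reps c -> (0 < fine (N c))%R ->
    (0 < fine (Dd g c) + fine (Dd g' c) - C * fine (N c))%R.
  move=> c Rc Np; rewrite subr_gt0 ltNge; apply/negP => h; apply: hneg; by exists c.
have hd0 : forall c, Reps c -> 0 <= d c.
  move=> c Rc; have := fine_ge0 (N_ge0 c); rewrite le_eqVlt => /orP[/eqP h | h].
    by rewrite /d -h mulr0 subr0 lee_fin addr_ge0 ?fine_ge0.
  by rewrite /d lee_fin ltW // hdpos.
have sa : \esum_(c in Reps) a c = C%:E.
  rewrite /a esumD; last 2 first.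
  - by move=> c _; exact: Dd_ge0.
  - by move=> c _; exact: Dd_ge0.
  by rewrite !sum_D /C EFinD -(finE (Ds_ge0 g) (Ds_fin g)) -(finE (Ds_ge0 g') (Ds_fin g')).
have sb : \esum_(c in Reps) b c = C%:E.
  transitivity (\esum_(c in Reps) (C%:E * N c)).
    by apply: eq_esum => c Rc; rewrite /b EFinM -(finE (N_ge0 c) (N_fin Rc)).
  by rewrite esumZ // sum_N mule1.
have h2 : C%:E = C%:E + \esum_(c in Reps) d c.
  rewrite -{1}sa -sb -esumD //; last by move=> c _; rewrite /b lee_fin mulr_ge0 // fine_ge0.
  by apply: eq_esum => c Rc; exact: hab.
have h1 := esum_termS (S := Reps) (a := d) hd0 Rc0.
have : C%:E + d c0 <= C%:E by rewrite [X in _ <= X]h2; exact: leeD (lexx _) h1.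
rewrite /d -EFinD lee_fin => h3.
have := hdpos c0 Rc0 Nc0; lra.
Qed.

Lemma lemA (alpha : R) (E : set (set G)) (H : set G) : (0 < alpha)%R ->
  K_local_ge E alpha -> E H -> H g -> g <> gone G -> ~ H g' ->
  (alpha ^+ 2 <= distV x (actV g x) ^+ 2 + distV x (actV g' x) ^+ 2)%R.
Proof.
move=> a0 hK EH Hg gn Hg'.
have hk := hK H g g' EH Hg gn Hg'.
have [c [Rc Nc hc]] := pigeon.
set u := uc c.
have hN : sqsum u = (fine (N c))%:E by rewrite /u sqsum_u; exact: finE (N_ge0 c) (N_fin Rc).
have l2u : l2norm u = Num.sqrt (fine (N c)) by rewrite /l2norm hN.
have l2du : forall s, L s ->
    (l2norm (fun z => lreg s u z - u z) <= Num.sqrt (fine (Dd s c)))%R.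
  move=> s Ls; rewrite /l2norm; apply: ler_wsqrtr; apply: fine_le.
  - rewrite ge0_fin_numE; last by apply: esum_ge0 => z _; rewrite lee_fin sqr_ge0.
    exact: le_lt_trans (sqsum_du c Ls) (Dd_fin s Rc).
  - by rewrite ge0_fin_numE // Dd_fin.
  - exact: sqsum_du.
set r := (Num.max (l2norm (fun z => lreg g u z - u z))
                  (l2norm (fun z => lreg g' u z - u z)) / l2norm u)%R.
have Kr : (Kxy R g g' <= r)%R.
  have hlb : has_lbound [set r | exists u : G -> R,
        [/\ (forall z, u z != 0%R -> gen2 g g' z), (sqsum u < +oo)%E,
            (exists z, u z != 0%R) &
            r = (Num.max (l2norm (fun z => lreg g u z - u z))
                        (l2norm (fun z => lreg g' u z - u z)) / l2norm u)%R]].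
    exists 0%R => y [v [_ _ _ ->]].
    by rewrite divr_ge0 ?sqrtr_ge0 // le_max sqrtr_ge0.
  apply: (ge_inf hlb); exists u; split => //.
  - move=> z; rewrite /u /uc; case: ifP => [/set_mem // | _]; by rewrite eqxx.
  - by rewrite hN ltry.
  - have [//|hn] := pselect (exists z, u z != 0%R).
    exfalso.
    have : sqsum u = 0.
      apply: esum1 => z _.
      case: (eqVneq (u z) 0%R) => [-> | h]; first by rewrite expr0n.
      by exfalso; apply: hn; exists z.
    rewrite hN => /eqP; rewrite eqe => /eqP h; move: Nc; rewrite h ltxx.
    done.
have rC : (r <= Num.sqrt C)%R.
  rewrite /r l2u ler_pdivrMr ?sqrtr_gt0 // -sqrtrM //.
  have hg : (fine (Dd g c) <= C * fine (N c))%R.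
    apply: le_trans hc; rewrite lerDl fine_ge0 //.
  have hg' : (fine (Dd g' c) <= C * fine (N c))%R.
    apply: le_trans hc; rewrite lerDr fine_ge0 //.
  rewrite ge_max; apply/andP; split.
    have hgL : L g by exact: gen2_l.
    have hh := l2du g hgL.
    apply: (le_trans hh); apply: ler_wsqrtr => //.
  have hgL : L g' by exact: gen2_r.
    have hh := l2du g' hgL.
    apply: (le_trans hh); apply: ler_wsqrtr => //.
have aC : (alpha <= Num.sqrt C)%R := le_trans hk (le_trans Kr rC).
have : (alpha ^+ 2 <= C)%R.
  rewrite -(sqr_sqrtr C0); have := sqrtr_ge0 C; nra.
move=> h; rewrite /distV !sqr_sqrtr; first exact: h.
- by apply: fine_ge0; exact: Ds_ge0.
- by apply: fine_ge0; exact: Ds_ge0.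
Qed.

End LemA.

Lemma I01P (R : realType) (t : R) : I01 t <-> 0 <= t <= 1.
Proof. by rewrite /I01 /= in_itv. Qed.

Lemma sphere_act (R : realType) (G : cgroup) (k : G) (f : vec R G) :
  sphere f -> sphere (actV k f).
Proof. by rewrite /sphere sqnormV_act. Qed.

Lemma distV_ge0 (R : realType) (G : cgroup) (f g : vec R G) : 0 <= distV f g.
Proof. exact: sqrtr_ge0. Qed.

Lemma three_bound (R : realType) (alpha D1 D2 : R) : 0 < alpha ->
  0 <= D1 -> D1 <= 3 * (alpha / 4) -> 0 <= D2 -> D2 <= alpha / 4 ->
  alpha ^+ 2 <= D1 ^+ 2 + D2 ^+ 2 -> False.
Proof.
move=> a0 d10 d1 d20 d2 h.
have h1 : D1 ^+ 2 <= (3 * (alpha / 4)) ^+ 2 by rewrite ler_sqr // ?nnegrE //; nra.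
have h2 : D2 ^+ 2 <= (alpha / 4) ^+ 2 by rewrite ler_sqr // ?nnegrE //; nra.
nra.
Qed.

Theorem lemma6p3 (R : realType) (alpha : R) : 0 < alpha ->
  exists2 delta : R, 0 < delta &
  forall (G : cgroup) (E : set (set G)),
    (forall H, E H -> malnormal H) -> covering E -> K_local_ge E alpha ->
    forall x0 : vec R G, thin delta x0 ->
    let Rc := pathcomp (thin delta) x0 in
    exists2 H, E H &
      forall p : R -> vec R G,
        qpath p -> orbit_eq (p 0) x0 -> orbit_eq (p 1) x0 ->
        (forall t, I01 t -> Rc (p t)) ->
        forall q : R -> vec R G,
          spath q -> (forall t, I01 t -> orbit_eq (p t) (q t)) -> q 0 = x0 ->
          exists2 h, H h & q 1 = actV h x0.
Proof.
move=> a0; exists (alpha / 4); first by rewrite divr_gt0.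
move=> G E hmal hcov hK x0 hthin Rc.
set d := alpha / 4.
have d0 : 0 < d by rewrite /d divr_gt0.
have sx0 : sphere x0 by case: hthin => [[]].
have [g0 g0n hg0] : exists2 g0, g0 <> gone G & distV x0 (actV g0 x0) <= d.
  case: hthin => _ [y [_ [m ->] [g gn hd]]]; exact: orbit_thin gn hd.
have [H0 EH0 H0g0] := hcov g0.
exists H0 => // p hp [a p1] [a1 hp1] hRc q hq hpq q0.
have sq : forall t, I01 t -> sphere (q t) by move=> t /(hq.1 t) [].
have key : forall t, I01 t ->
    exists2 g, g <> gone G & distV (q t) (actV g (q t)) <= d.
  move=> t It.
  have [_ [p' [_ _ [k hk] hthin']]] := hRc t It.
  have I1 : I01 (1 : R) by apply/I01P; rewrite lexx ler01.
  have [_ [y [_ [j hj] [g gn hd]]]] := hthin' 1 I1.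
  have [b hb] := hpq t It.
  apply: (orbit_thin (m := gmul j (ginv (gmul b k)))) gn _.
  have -> : actV (gmul j (ginv (gmul b k))) (q t) = y.
    by rewrite hb hk !actV_comp -!gmulA gmulA gmulrVK hj.
  exact: hd.
pose Iv t := exists2 g, H0 g /\ g <> gone G & distV (q t) (actV g (q t)) <= d.
have prop : forall t s, I01 t -> I01 s -> Iv t -> distV (q s) (q t) < d -> Iv s.
  move=> t s It Is [g [Hg gn] hdg] hst.
  have [gs gsn hds] := key s Is.
  exists gs => //; split => //.
  apply/not_notP => nH.
  have hA := lemA (sq s Is) a0 hK EH0 Hg gn nH.
  have t1 : distV (q s) (actV g (q s)) <=
      distV (q s) (q t) + (distV (q t) (actV g (q t)) + distV (actV g (q t)) (actV g (q s))).
    apply: le_trans (distV_tri _ _) _.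
    - exact: sphere_dfin (sq s Is) (sq t It).
    - by apply: sphere_dfin (sq t It) _; apply: sphere_act; exact: sq s Is.
    rewrite lerD2l; apply: distV_tri.
    - by apply: sphere_dfin (sq t It) _; apply: sphere_act; exact: sq t It.
    - by apply: sphere_dfin; apply: sphere_act; [exact: sq t It | exact: sq s Is].
  rewrite distV_act (distV_sym (q t) (q s)) in t1.
  have b1 : distV (q s) (actV g (q s)) <= 3 * (alpha / 4) by rewrite -/d; lra.
  exact: (three_bound a0 (distV_ge0 _ _) b1 (distV_ge0 _ _) hds hA).
have Iv0 : Iv 0.
  by exists g0; [split | rewrite q0].
pose T := [set t : R | (0 <= t <= 1) /\ forall s, 0 <= s <= t -> Iv s].
have T0 : T 0.
  split; first by rewrite lexx ler01.
  by move=> s hs; have -> : s = 0 by apply/eqP; rewrite eq_le andbC.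
have T1 : ubound T 1 by move=> t [/andP[_ ->]].
have hsup : has_sup T by split; [exists 0 | exists 1].
set m := sup T.
have m0 : 0 <= m by apply: sup_upper_bound.
have m1 : m <= 1 by apply: ge_sup => //; exists 0.
have Im : I01 m by apply/I01P; rewrite m0 m1.
have [eta eta0 hc] := hq.2 m Im d d0.
have [t0 Tt0 ht0] := sup_adherent eta0 hsup.
have t0m : t0 <= m by apply: sup_upper_bound.
have It0 : I01 t0 by apply/I01P; case: Tt0 => -[].
have Iv_t0 : Iv t0 by case: Tt0 => [/andP[h1 _] h]; apply: h; rewrite h1 lexx.
have Ivm : Iv m.
  apply: (prop t0 m It0 Im Iv_t0); rewrite distV_sym; apply: hc => //.
  rewrite -/m ltr_norml; apply/andP; split; rewrite -/m in ht0 *; lra.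
have I1 : I01 (1 : R) by apply/I01P; rewrite lexx ler01.
have Iv1 : Iv 1.
  have [lt1|ge1] := ltP (1 - m) eta.
    apply: (prop m 1 Im I1 Ivm); apply: hc => //.
    by rewrite ger0_norm; lra.
  exfalso.
  have : T (m + eta / 2).
    split; first by apply/andP; split; lra.
    move=> s /andP[s0 s1].
    have [st0|st0] := leP s t0.
      by case: Tt0 => _ h; apply: h; rewrite s0 st0.
    have Is : I01 s by apply/I01P; apply/andP; split; lra.
    apply: (prop m s Im Is Ivm); apply: hc => //.
    rewrite ltr_norml; apply/andP; split; rewrite -/m in ht0 *; lra.
  move/sup_upper_bound: hsup => h /h; rewrite -/m; lra.
have [g [Hg gn] hd1] := Iv1.
have [b hb] := hpq 1 I1.
set h := gmul b (ginv a1).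
have qh : q 1 = actV h x0 by rewrite hb hp1 actV_comp /h gmulrVK.
clearbody h.
exists h => //.
apply/not_notP => nh.
have hconj : distV x0 (actV (gmul (gmul (ginv h) g) h) x0) <= d.
  rewrite -(distV_act h) !actV_comp -!gmulA gmulVK -actV_comp -qh; exact: hd1.
have Hc : H0 (gmul (gmul (ginv h) g) h).
  apply/not_notP => nc.
  have hA := lemA sx0 a0 hK EH0 H0g0 g0n nc.
  have b1 : distV x0 (actV g0 x0) <= 3 * (alpha / 4) by rewrite -/d; lra.
  exact: (three_bound a0 (distV_ge0 _ _) b1 (distV_ge0 _ _) hconj hA).
have [[_ [_ Hinv]] mal] := hmal H0 EH0.
apply: gn; apply: (mal (ginv h)) => //.
  by move=> /Hinv; rewrite ginvK.
by rewrite ginvK.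
Qed.
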